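(* There exists a family of CNFs $(\Delta_n)_{n \ge 3}$, where $\Delta_n$ has $n^3$ clauses, such that: (i) the primal treewidth of $\Delta_n$ is at least $n$ (in particular unbounded), and (ii) applying the BVA transformation 2 times to $\Delta_n$ can generate a CNF whose primal treewidth is at most 2.
   Context: BVA transformation: given a CNF $\Delta$ and a fresh variable $Y$ not occurring in $\Delta$, choose a set $C_Y = \{Y \vee \alpha_1,\ldots, Y\vee \alpha_m\}$ of clauses containing literal $Y$ and a set $C_{\neg Y} = \{\neg Y \vee \beta_1,\ldots,\neg Y\vee\beta_k\}$ of clauses containing $\neg Y$ (with $\alpha_i,\beta_j$ clauses over variables of $\Delta$) such that the set of resolvents $C_Y \bowtie C_{\neg Y} = \{\alpha_i \vee \beta_j\}$ is contained in the clauses of $\Delta$ and $|C_Y \bowtie C_{\neg Y}| > |C_Y| + |C_{\neg Y}|$; the result is $\Delta$ with the clauses $C_Y \bowtie C_{\neg Y}$ removed and the clauses $C_Y \cup C_{\neg Y}$ added. Primal treewidth: a jointree for a CNF $\Delta$ is a tree whose vertices are labeled with subsets (clusters) of the variables of $\Delta$ such that (i) for each clause some cluster contains all its variables, and (ii) if a variable appears in two clusters then it appears in every cluster on the path between them. The width of a jointree is its largest cluster size minus 1; the primal treewidth of $\Delta$ is the minimum width over its jointrees. *)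

(* Defs.v *)
From HB Require Import structures.
From mathcomp Require Import all_boot finmap.
Set Implicit Arguments. Unset Strict Implicit. Unset Printing Implicit Defensive.
Local Open Scope fset_scope.

(** Variables are natural numbers; a literal is a pair (x, b):
    (x, true) is the positive literal x, (x, false) is the negative literal ~x. *)
Definition lit := (nat * bool)%type.
Definition clause := {fset lit}.
Definition cnf := {fset clause}.

Definition clause_vars (c : clause) : {fset nat} := [fset l.1 | l in c].
Definition cnf_vars (D : cnf) : {fset nat} := \bigcup_(c <- D) clause_vars c.

Definition resolvents (A B : {fset clause}) : {fset clause} :=
  [fset a `|` b | a in A, b in B].

(** One BVA transformation step from D to D'. A = {alpha_i}, B = {beta_j},
    C_Y = {Y \/ alpha_i}, C_~Y = {~Y \/ beta_j}. *)
Definition bva_step (D D' : cnf) : Prop :=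
  exists (Y : nat) (A B : {fset clause}),
    [/\ Y \notin cnf_vars D,
        (forall a, a \in A -> clause_vars a `<=` cnf_vars D) /\
        (forall b, b \in B -> clause_vars b `<=` cnf_vars D),
        resolvents A B `<=` D,
        (#|` [fset (Y, true) |` a | a in A]| + #|` [fset (Y, false) |` b | b in B]|
           < #|` resolvents A B|)%N
      & D' = (D `\` resolvents A B) `|` [fset (Y, true) |` a | a in A]
                                      `|` [fset (Y, false) |` b | b in B]].

(** Trees: a nonempty finite vertex type with a symmetric irreflexive edge
    relation, connected, in which between any two vertices there is exactly
    one simple path (acyclicity = at most one simple path). A path from x to y
    is a sequence p with path e x p and last x p = y; its vertices are x :: p. *)
Definition simple_path (T : finType) (e : rel T) (x y : T) (p : seq T) : bool :=
  [&& path e x p, last x p == y & uniq (x :: p)].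

Definition is_tree (T : finType) (e : rel T) : Prop :=
  [/\ (0 < #|T|)%N, symmetric e, irreflexive e,
      (forall x y : T, connect e x y)
    & (forall x y p q, simple_path e x y p -> simple_path e x y q -> p = q)].

Definition is_jointree (D : cnf) (T : finType) (e : rel T) (cl : T -> {fset nat}) : Prop :=
  [/\ is_tree e,
      (forall t, cl t `<=` cnf_vars D),
      (forall c, c \in D -> exists t, clause_vars c `<=` cl t)
    & (forall v x y p, v \in cl x -> v \in cl y -> simple_path e x y p ->
         forall z, z \in x :: p -> v \in cl z)].

Definition jt_width (T : finType) (cl : T -> {fset nat}) : nat :=
  ((\max_(t : T) #|` cl t|) - 1)%N.

(** Primal treewidth = minimum width over jointrees; we express the two
    bounds we need directly in terms of that minimum. *)
Definition primal_tw_ge (D : cnf) (n : nat) : Prop :=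
  forall (T : finType) (e : rel T) (cl : T -> {fset nat}),
    is_jointree D e cl -> (n <= jt_width cl)%N.

Definition primal_tw_le (D : cnf) (n : nat) : Prop :=
  exists (T : finType) (e : rel T) (cl : T -> {fset nat}),
    is_jointree D e cl /\ (jt_width cl <= n)%N.

(* Main.v *)
Require Import Defs.
From HB Require Import structures.
From mathcomp Require Import all_boot finmap.
From mathcomp Require Import zify.
Local Open Scope fset_scope.
Set Implicit Arguments. Unset Strict Implicit.

Section Rooted.
Variables (T : finType) (e : rel T).
Hypothesis tree : is_tree e.
Variable r : T.

Lemma ex_spath x y : exists p, simple_path e x y p.
Proof.
case: tree => _ _ _ conn _.
have /connectP [p pth ->] := conn x y.
case/shortenP: pth => q pq uq _.
by exists q; rewrite /simple_path pq uq eqxx.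
Qed.

Lemma spath_uniq x y p q : simple_path e x y p -> simple_path e x y q -> p = q.
Proof. by case: tree => _ _ _ _; apply. Qed.

Definition rp x := xchoose (ex_spath x r).
Lemma rpP x : simple_path e x r (rp x).
Proof. exact: xchooseP. Qed.
Definition dep x := size (rp x).

Lemma rp_eq x p : simple_path e x r p -> rp x = p.
Proof. by move=> h; apply: spath_uniq (rpP x) h. Qed.

Lemma suffix x p1 u p2 : simple_path e x r (p1 ++ u :: p2) -> rp u = p2.
Proof.
case/and3P=> pth lst un; apply: rp_eq.
move: pth; rewrite cat_path => /andP [_ /= /andP [_ pth2]].
move: lst; rewrite last_cat /= => lst.
move: un; rewrite -cat_cons cat_uniq => /and3P [_ _ un2].
by rewrite /simple_path pth2 lst un2.
Qed.

Lemma prefix x p1 u p2 : simple_path e x r (p1 ++ u :: p2) -> simple_path e x u (rcons p1 u).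
Proof.
case/and3P=> pth _ un.
move: pth; rewrite cat_path => /andP [pth1 /= /andP [eu _]].
move: un; rewrite -cat_cons cat_uniq => /and3P [u1 h _].
rewrite /simple_path rcons_path pth1 eu last_rcons eqxx -rcons_cons rcons_uniq u1 !andbT /=.
apply: contra h => h; apply/hasP; exists u => //; exact: mem_head.
Qed.

Definition convex (S : pred T) :=
  forall x y p, S x -> S y -> simple_path e x y p -> forall z, z \in x :: p -> S z.

Definition top (S : pred T) t := S t /\ forall u, S u -> dep t <= dep u.

Lemma top_anc S t x : convex S -> top S t -> S x -> t \in x :: rp x.
Proof.
move=> cS [St mt] Sx.
have [q sq] := ex_spath x t.
have /and3P [qp ql qu] := sq.
have /and3P [tp tl tu] := rpP t.
case U: (uniq (x :: q ++ rp t)).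
  have -> : rp x = q ++ rp t.
    apply: rp_eq; rewrite /simple_path U cat_path qp (eqP ql) tp last_cat (eqP ql) tl.
    by [].
  rewrite -cat_cons mem_cat; apply/orP; left.
  by rewrite -(eqP ql) mem_last.
move: U; rewrite -cat_cons cat_uniq qu /=.
move: tu => /= /andP [_ ->]; rewrite andbT => /negbFE /hasP [u ut ux].
have Su : S u by apply: (cS x t q).
have := mt u Su; rewrite /dep.
case/splitPr: ut (rpP t) => p1 p2 h.
rewrite (suffix h) size_cat /=; lia.
Qed.

Lemma anc_between x t u : t \in x :: rp x -> u \in x :: rp x -> dep u <= dep t ->
  exists q, simple_path e x u q /\ t \in x :: q.
Proof.
move=> tx; rewrite in_cons => /orP [/eqP -> | ux].
  move: tx; rewrite in_cons => /orP [/eqP -> | tx] dd.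
    by exists [::]; rewrite /simple_path /= eqxx mem_head.
  exfalso; move: dd; rewrite /dep.
  case/splitPr: tx (rpP x) => p1 p2 h.
  rewrite (suffix h) size_cat /=; lia.
move: tx.
case/splitPr: ux (rpP x) => p1 p2 h.
move=> tx dd; exists (rcons p1 u); split; first exact: (prefix h).
move: tx; rewrite -cat_cons mem_cat => /orP [tx|].
  by rewrite -rcons_cons mem_rcons in_cons tx orbT.
rewrite in_cons => /orP [/eqP ->|tp2].
  by rewrite -rcons_cons mem_rcons mem_head.
exfalso; move: dd; rewrite /dep (suffix h).
case/splitPr: tp2 h => s1 s2 h.
have h2 : simple_path e x r ((p1 ++ u :: s1) ++ t :: s2) by rewrite -catA.
rewrite (suffix h2) size_cat /=; lia.
Qed.

Lemma top_in S1 S2 t1 t2 x : convex S1 -> convex S2 -> top S1 t1 -> top S2 t2 ->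
  dep t2 <= dep t1 -> S1 x -> S2 x -> S2 t1.
Proof.
move=> c1 c2 tp1 tp2 dd x1 x2.
have a1 := top_anc c1 tp1 x1.
have a2 := top_anc c2 tp2 x2.
have [q [sq tq]] := anc_between a1 a2 dd.
exact: (c2 x t2 q x2 tp2.1 sq).
Qed.

End Rooted.
Lemma biclique_lb (D : cnf) (T : finType) (e : rel T) (cl : T -> {fset nat}) (sX sY : seq nat) :
  is_jointree D e cl -> uniq (sX ++ sY) ->
  (forall x y, x \in sX -> y \in sY -> exists t, (x \in cl t) && (y \in cl t)) ->
  forall x0 y0, x0 \in sX -> y0 \in sY ->
  exists t, (minn (size sX) (size sY)).+1 <= #|` cl t|.
Proof.
move=> [tr _ _ ri] un pairs x0 y0 x0X y0Y.
have [r _] := pairs x0 y0 x0X y0Y.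
pose S v := fun t => v \in cl t.
have cv v : convex e (S v).
  by move=> x y p Sx Sy sp z zp; apply: (ri v x y p).
pose istop v t := (v \in cl t) && [forall u, (v \in cl u) ==> (dep tr r t <= dep tr r u)].
have istopP v t : istop v t -> top tr r (S v) t.
  case/andP=> h1 /forallP h2; split=> // u Su; exact: (implyP (h2 u)).
have ne v : v \in sX ++ sY -> exists t, v \in cl t.
  rewrite mem_cat => /orP [vX|vY].
    by have [t /andP [h _]] := pairs v y0 vX y0Y; exists t.
  by have [t /andP [_ h]] := pairs x0 v x0X vY; exists t.
have extop v : v \in sX ++ sY -> exists t, istop v t.
  move=> /ne [t1 h1].
  case: (@arg_minnP _ t1 (fun t => v \in cl t) (dep tr r) h1) => t Pt mt.
  exists t; rewrite /istop Pt /=; apply/forallP => u; apply/implyP; exact: mt.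
pose W := [pred t | has (fun v => istop v t) (sX ++ sY)].
have [t1 ht1] : exists t, istop x0 t by apply: extop; rewrite mem_cat x0X.
have W1 : W t1 by apply/hasP; exists x0; rewrite ?mem_cat ?x0X.
case: (@arg_maxnP _ t1 W (dep tr r) W1) => ts Wts mts.
case/hasP: Wts => v0 v0in tv0.
have key w : w \in sX ++ sY -> (exists t, (v0 \in cl t) && (w \in cl t)) -> w \in cl ts.
  move=> win [x /andP [x1 x2]].
  have [tw htw] := extop w win.
  have Wtw : W tw by apply/hasP; exists w.
  apply: (top_in (cv v0) (cv w) (istopP _ _ tv0) (istopP _ _ htw) (mts _ Wtw) x1 x2).
exists ts.
have v0ts : v0 \in cl ts by case/andP: tv0.
move: un; rewrite cat_uniq => /and3P [uX dj uY].
move: v0in; rewrite mem_cat => /orP [v0X|v0Y].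
  apply: leq_trans (_ : size (v0 :: sY) <= _); first by rewrite /= ltnS geq_minr.
  apply: uniq_leq_size.
    rewrite /= uY andbT; apply: contra dj => h; apply/hasP; exists v0 => //.
  move=> z; rewrite in_cons => /orP [/eqP -> //| zY].
  apply: key; first by rewrite mem_cat zY orbT.
  exact: pairs.
apply: leq_trans (_ : size (v0 :: sX) <= _); first by rewrite /= ltnS geq_minl.
apply: uniq_leq_size.
  rewrite /= uX andbT; apply: contra dj => h; apply/hasP; exists v0 => //.
move=> z; rewrite in_cons => /orP [/eqP -> //| zX].
apply: key; first by rewrite mem_cat zX.
have [t /andP [h1 h2]] := pairs z v0 zX v0Y.
by exists t; rewrite h1 h2.
Qed.
Section Star.
Variable S : finType.
Definition se : rel (option S) := fun u v => (u == None) != (v == None).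

Lemma spath_star x y p : simple_path se x y p ->
  [\/ p = [::] /\ y = x, p = [:: y] | p = [:: None; y]].
Proof.
move=> /and3P [pth /eqP lst un].
case: p pth lst un => [|a [|b [|c p]]] /=.
- by move=> _ <- _; constructor 1.
- by move=> _ <- _; constructor 2.
- move=> /andP [e1 /andP [e2 _]] <- un.
  case: a e1 e2 un => [a|]; last by constructor 3.
  case: x => [x|]; case: b => [b|] //=.
- move=> /and4P [e1 e2 e3 _] _ /and5P [u1 u2 _ _ _].
  exfalso; move: e1 e2 e3 u1 u2.
  case: x => [x|]; case: a => [a|]; case: b => [b|]; case: c => [c|] //=;
  rewrite !inE /= ?eqxx ?orbT ?andbF //.
Qed.

Lemma star_tree : is_tree se.
Proof.
split.
- by rewrite card_option.
- by move=> u v; rewrite /se eq_sym.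
- by move=> u; rewrite /se eqxx.
- move=> x y; apply: (@connect_trans _ _ None).
    by case: x => [x|]; [apply: connect1 | apply: connect0].
  by case: y => [y|]; [apply: connect1 | apply: connect0].
- move=> x y p q hp hq.
  case: (spath_star hp) => [[E1 E1']|E1|E1]; case: (spath_star hq) => [[E2 E2']|E2|E2];
    subst p q; try subst y; move: hp hq; rewrite /simple_path /= ?inE ?eqxx ?orbT ?andbF ?andbT //;
    case: x => [x|]; try case: y => [y|] //.
Qed.
End Star.

Lemma in_cnf_vars (D : cnf) v : reflect (exists2 c, c \in D & v \in clause_vars c) (v \in cnf_vars D).
Proof.
apply: (iffP (bigfcupP _ _ _ _)).
- by move=> [c /andP [cD _] h]; exists c.
- by move=> [c cD h]; exists c; rewrite ?cD.
Qed.

Lemma card3 (a b v : nat) : #|` [fset a; b; v]| <= 3.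
Proof.
apply: leq_trans (leq_card_fsetU _ _).1 _; rewrite cardfs1 addn1 ltnS.
by apply: leq_trans (leq_card_fsetU _ _).1 _; rewrite !cardfs1.
Qed.

Lemma star_tw (D : cnf) (a b M : nat) : a \in cnf_vars D -> b \in cnf_vars D ->
  (forall c, c \in D -> exists2 v, v < M & clause_vars c `<=` [fset a; b; v]) ->
  primal_tw_le D 2.
Proof.
move=> aD bD cov.
pose cl (t : option 'I_M) : {fset nat} :=
  if t is Some k then (if val k \in cnf_vars D then [fset a; b; val k] else [fset a; b])
  else [fset a; b].
have abcl t w : w \in [fset a; b] -> w \in cl t.
  move=> h; case: t => [k|] /=; [case: ifP => _|]; rewrite ?inE; move: h; rewrite !inE => /orP [] ->; rewrite ?orbT //=.
exists (option 'I_M : finType), (@se 'I_M), cl; split; last first.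
  rewrite /jt_width leq_subLR.
  apply/bigmax_leqP => t _; rewrite /cl; case: t => [k|]; last first.
    by rewrite cardfs2; case: (_ != _).
  by case: ifP => _; [apply: card3| rewrite cardfs2; case: (_ != _)].
split.
- exact: star_tree.
- move=> t; apply/fsubsetP => w; rewrite /cl.
  case: t => [k|]; [case: ifP => kD|].
  + by rewrite !inE => /orP [/orP [] | ] /eqP ->.
  + by rewrite !inE => /orP [] /eqP ->.
  + by rewrite !inE => /orP [] /eqP ->.
- move=> c cD; have [v vM sub] := cov c cD.
  exists (Some (Ordinal vM)); apply/fsubsetP => w wc.
  have wD : w \in cnf_vars D by apply/in_cnf_vars; exists c.
  move: (fsubsetP sub w wc); rewrite /cl /=.
  case: ifP => vD; first exact: id.
  rewrite !inE.
  case/orP => [-> //| /eqP E]. by rewrite -E wD in vD.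
- move=> v x y p vx vy sp z zp.
  case ab: (v \in [fset a; b]); first exact: abcl.
  have priv t : v \in cl t -> exists k, t = Some k /\ v = val k.
    rewrite /cl; case: t => [k|]; last by rewrite ab.
    case: ifP => _; last by rewrite ab.
    rewrite !inE; case/orP => [/orP [] /eqP E|/eqP ->]; last by exists k.
    + by move: ab; rewrite E !inE eqxx.
    + by move: ab; rewrite E !inE eqxx orbT.
  have [k [ex vk]] := priv x vx.
  have [k' [ey vk']] := priv y vy.
  have exy : y = x by rewrite ex ey; congr Some; apply: val_inj; rewrite /= -vk -vk'.
  have /and3P [_ _ un] := sp.
  case: (spath_star sp) => [[pe _]|pe|pe]; move: zp un; rewrite pe ?exy.
  + by rewrite inE => /eqP ->.
  + by rewrite /= !inE eqxx.
  + by rewrite /= !inE eqxx !orbT.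
Qed.

Definition lx i : clause := [fset ((3 * i)%N, true)].
Definition ly j : clause := [fset ((3 * j + 1)%N, true)].
Definition pc i j : clause := lx i `|` ly j.
Definition Xs m : {fset clause} := [fset lx i | i in iota 0 m].
Definition Ys a k : {fset clause} := [fset ly j | j in iota a k].

Lemma mem_pc l i j : (l \in pc i j) = (l == ((3 * i)%N, true)) || (l == ((3 * j + 1)%N, true)).
Proof. by rewrite /pc /lx /ly !inE. Qed.

Lemma pc_inj i j i' j' : pc i j = pc i' j' -> i = i' /\ j = j'.
Proof.
move=> E.
have h1 : ((3 * i)%N, true) \in pc i' j' by rewrite -E mem_pc eqxx.
have h2 : ((3 * j + 1)%N, true) \in pc i' j' by rewrite -E mem_pc eqxx orbT.
move: h1 h2; rewrite !mem_pc !xpair_eqE !eqxx !andbT.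
move=> /orP [/eqP|/eqP] A /orP [/eqP|/eqP] B; lia.
Qed.

Lemma mem_Xs m c : (c \in Xs m) <-> exists2 i, i < m & c = lx i.
Proof.
split.
- by case/imfsetP => i /=; rewrite mem_iota add0n => im ->; exists i.
- by case=> i im ->; apply/imfsetP; exists i => //=; rewrite mem_iota add0n im.
Qed.

Lemma mem_Ys a k c : (c \in Ys a k) <-> exists2 j, a <= j < a + k & c = ly j.
Proof.
split.
- by case/imfsetP => j /=; rewrite mem_iota => jm ->; exists j.
- by case=> j jm ->; apply/imfsetP; exists j => //=; rewrite mem_iota.
Qed.

Lemma mem_res m a k c : (c \in resolvents (Xs m) (Ys a k)) <->
  exists i j, [/\ i < m, a <= j < a + k & c = pc i j].
Proof.
split.
- case/imfset2P => x /= /mem_Xs [i im ->] [y /= /mem_Ys [j jk ->] ->].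
  by exists i, j.
- case=> i [j [im jk ->]]; apply/imfset2P; exists (lx i); first by apply/mem_Xs; exists i.
  by exists (ly j) => //; apply/mem_Ys; exists j.
Qed.

Lemma card_le_seq (T : choiceType) (A : {fset T}) (s : seq T) :
  (forall c, c \in A -> c \in s) -> #|` A| <= size s.
Proof.
move=> h; apply: (@leq_trans #|` [fset x in s]|).
  by apply: fsubset_leq_card; apply/fsubsetP => x /h xs; rewrite in_fset.
by rewrite card_fseq size_undup.
Qed.

Lemma card_ge_seq (T : choiceType) (A : {fset T}) (s : seq T) :
  uniq s -> (forall c, c \in s -> c \in A) -> size s <= #|` A|.
Proof. by move=> u h; apply: uniq_leq_size. Qed.

Lemma card_res m a k : #|` resolvents (Xs m) (Ys a k)| = m * k.
Proof.
pose s := [seq pc i j | i <- iota 0 m, j <- iota a k].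
have ms c : (c \in s) <-> exists i j, [/\ i < m, a <= j < a + k & c = pc i j].
  split.
  - case/allpairsP => [[i j] /= [] ]; rewrite !mem_iota add0n => im jk ->.
    by exists i, j.
  - case=> i [j [im jk ->]]; apply/allpairsP; exists (i, j) => /=.
    by rewrite !mem_iota add0n im.
have us : uniq s.
  apply: allpairs_uniq; rewrite ?iota_uniq //.
  by move=> [i j] [i' j'] _ _ /= /pc_inj [-> ->].
have ss : size s = m * k by rewrite size_allpairs !size_iota.
apply/eqP; rewrite -ss eqn_leq; apply/andP; split.
  by apply: card_le_seq => c /mem_res /ms.
by apply: card_ge_seq => // c /ms /mem_res.
Qed.

Lemma card_img_Xs (f : clause -> clause) m : #|` [fset f x | x in Xs m]| <= m.
Proof.
apply: (@leq_trans (size (map (f \o lx) (iota 0 m)))); last by rewrite size_map size_iota.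
apply: card_le_seq => c /imfsetP [x /= /mem_Xs [i im ->] ->].
by apply/mapP; exists i; rewrite ?mem_iota.
Qed.

Lemma card_img_Ys (f : clause -> clause) a k : #|` [fset f x | x in Ys a k]| <= k.
Proof.
apply: (@leq_trans (size (map (f \o ly) (iota a k)))); last by rewrite size_map size_iota.
apply: card_le_seq => c /imfsetP [x /= /mem_Ys [j jk ->] ->].
by apply/mapP; exists j; rewrite ?mem_iota.
Qed.

Lemma mem_cv c w : (w \in clause_vars c) <-> exists b, (w, b) \in c.
Proof.
split.
- by case/imfsetP => [[w' b] /= lc ->]; exists b.
- by case=> b h; apply/imfsetP; exists (w, b).
Qed.

Lemma mem_imX (f : clause -> clause) m c :
  (c \in [fset f x | x in Xs m]) <-> exists2 i, i < m & c = f (lx i).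
Proof.
split.
- by case/imfsetP => x /= /mem_Xs [i im ->] ->; exists i.
- by case=> i im ->; apply/imfsetP; exists (lx i) => //=; apply/mem_Xs; exists i.
Qed.

Lemma mem_imY (f : clause -> clause) a k c :
  (c \in [fset f x | x in Ys a k]) <-> exists2 j, a <= j < a + k & c = f (ly j).
Proof.
split.
- by case/imfsetP => x /= /mem_Ys [j jk ->] ->; exists j.
- by case=> j jk ->; apply/imfsetP; exists (ly j) => //=; apply/mem_Ys; exists j.
Qed.

Lemma cv_pc w i j : w \in clause_vars (pc i j) -> w = (3 * i)%N \/ w = (3 * j + 1)%N.
Proof.
by case/mem_cv => b; rewrite mem_pc !xpair_eqE => /orP [/andP [/eqP -> _]|/andP [/eqP -> _]]; [left|right].
Qed.

Lemma cv_U1 (l : lit) c w : w \in clause_vars (l |` c) -> w = l.1 \/ w \in clause_vars c.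
Proof.
case/mem_cv => b; rewrite !inE => /orP [/eqP E | h]; first by left; rewrite -E.
by right; apply/mem_cv; exists b.
Qed.

Lemma cv_lx w i : w \in clause_vars (lx i) -> w = (3 * i)%N.
Proof. by case/mem_cv => b; rewrite /lx !inE xpair_eqE => /andP [/eqP -> _]. Qed.

Lemma cv_ly w j : w \in clause_vars (ly j) -> w = (3 * j + 1)%N.
Proof. by case/mem_cv => b; rewrite /ly !inE xpair_eqE => /andP [/eqP -> _]. Qed.

Lemma in_vars (D : cnf) c w : c \in D -> w \in clause_vars c -> w \in cnf_vars D.
Proof. by move=> cD wc; apply/in_cnf_vars; exists c. Qed.

Lemma in_cv (c : clause) w b : (w, b) \in c -> w \in clause_vars c.
Proof. by move=> h; apply/mem_cv; exists b. Qed.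

Theorem theorem5 :
  exists Delta : nat -> cnf,
    forall n : nat, (3 <= n)%N ->
      [/\ #|` Delta n| = (n ^ 3)%N,
          primal_tw_ge (Delta n) n
        & exists D1 D2 : cnf,
            [/\ bva_step (Delta n) D1, bva_step D1 D2 & primal_tw_le D2 2]].
Proof.
exists (fun n => resolvents (Xs n) (Ys 0 (n ^ 2))) => n n3.
have nN : (n <= n ^ 2)%N by rewrite expnS expn1 leq_pmulr //; lia.
have n3N : (3 * n <= n ^ 2)%N by rewrite expnS expn1 leq_mul2r n3 orbT.
set N := (n ^ 2)%N in nN n3N *.
set Delta := resolvents (Xs n) (Ys 0 N).
have memD c : c \in Delta <-> exists i j, [/\ (i < n)%N, (j < N)%N & c = pc i j].
  rewrite /Delta mem_res; split => [[i [j [? ? ?]]]|[i [j [? ? ?]]]]; exists i, j; split => //; lia.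
split.
- by rewrite card_res /N -expnS.
- move=> T e cl J.
  pose sX := [seq (3 * i)%N | i <- iota 0 n].
  pose sY := [seq (3 * j + 1)%N | j <- iota 0 n].
  have un : uniq (sX ++ sY).
    rewrite cat_uniq !map_inj_uniq ?iota_uniq //; last 2 first.
      by move=> x y /=; lia.
      by move=> x y /=; lia.
    rewrite andbT; apply/hasPn => y /mapP [j _ ->]; apply/negP => /mapP [i _]; lia.
  have pairs x y : x \in sX -> y \in sY -> exists t, (x \in cl t) && (y \in cl t).
    move=> /mapP [i]; rewrite mem_iota => /andP [_ ilt] -> /mapP [j]; rewrite mem_iota => /andP [_ jlt] ->.
    have cD : pc i j \in Delta by apply/memD; exists i, j; split => //; lia.
    case: J => _ _ cov _; have [t /fsubsetP sub] := cov _ cD.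
    exists t; apply/andP; split; apply: sub; apply: (@in_cv _ _ true);
      by rewrite mem_pc eqxx ?orbT.
  have x0 : 0%N \in sX by apply/mapP; exists 0%N; rewrite ?mem_iota //=; lia.
  have y0 : 1%N \in sY by apply/mapP; exists 0%N; rewrite ?mem_iota //=; lia.
  have [t ht] := biclique_lb J un pairs x0 y0.
  rewrite /jt_width; apply: (@leq_trans (#|` cl t| - 1)).
    by move: ht; rewrite !size_map !size_iota minnn; lia.
  by apply: leq_sub2r; apply: (@leq_bigmax _ (fun t => #|` cl t|)).
set R1 := resolvents (Xs n) (Ys 0 n).
set R2 := resolvents (Xs n) (Ys n (N - n)).
set D1 := Delta `\` R1 `|` [fset (2%N, true) |` a | a in Xs n] `|` [fset (2%N, false) |` b | b in Ys 0 n].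
set D2 := D1 `\` R2 `|` [fset (5%N, true) |` a | a in Xs n] `|` [fset (5%N, false) |` b | b in Ys n (N - n)].
have memR1 c : c \in R1 <-> exists i j, [/\ (i < n)%N, (j < n)%N & c = pc i j].
  rewrite /R1 mem_res; split => [[i [j [? ? ?]]]|[i [j [? ? ?]]]]; exists i, j; split => //; lia.
have memR2 c : c \in R2 <-> exists i j, [/\ (i < n)%N, (n <= j < N)%N & c = pc i j].
  rewrite /R2 mem_res; split => [[i [j [? ? ?]]]|[i [j [? ? ?]]]]; exists i, j; split => //; lia.
have memD1 c : c \in D1 <-> [\/ c \in Delta /\ c \notin R1,
     exists2 i, (i < n)%N & c = (2%N, true) |` lx i
   | exists2 j, (j < n)%N & c = (2%N, false) |` ly j].
  rewrite /D1 !in_fsetU in_fsetD.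
  split.
  - case/orP => [/orP [/andP [h1 h2]|/mem_imX h]|/mem_imY h].
    + by constructor 1.
    + by constructor 2.
    + by constructor 3; case: h => j jl ->; exists j => //; lia.
  - case => [[h1 h2]|h|[j jl ->]].
    + by rewrite h1 h2.
    + by apply/orP; left; apply/orP; right; apply/mem_imX.
    + by apply/orP; right; apply/mem_imY; exists j => //; lia.
have memD2 c : c \in D2 <-> [\/ c \in D1 /\ c \notin R2,
     exists2 i, (i < n)%N & c = (5%N, true) |` lx i
   | exists2 j, (n <= j < N)%N & c = (5%N, false) |` ly j].
  rewrite /D2 in_fsetU in_fsetU in_fsetD.
  split.
  - case/orP => [/orP [/andP [h1 h2]|/mem_imX h]|/mem_imY h].
    + by constructor 1.
    + by constructor 2.
    + by constructor 3; case: h => j jl ->; exists j => //; lia.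
  - case => [[h1 h2]|h|[j jl ->]].
    + by rewrite h1 h2.
    + by apply/orP; left; apply/orP; right; apply/mem_imX.
    + by apply/orP; right; apply/mem_imY; exists j => //; lia.
have pcD1 i j : (i < n)%N -> (n <= j < N)%N -> pc i j \in D1.
  move=> il jl; apply/memD1; constructor 1; split.
    by apply/memD; exists i, j; split => //; lia.
  apply/negP => /memR1 [i' [j' [_ jl' /pc_inj [_ E]]]]; lia.
have notpc (l : lit) (c : clause) i j : l \in c -> (l.1 != 3 * i)%N -> (l.1 != 3 * j + 1)%N -> c != pc i j.
  move=> lc h1 h2; apply/negP => /eqP E; move: lc; rewrite E mem_pc.
  case: l h1 h2 => w b /= h1 h2; rewrite !xpair_eqE.
  by move: h1 h2 => /negbTE -> /negbTE ->.
exists D1, D2; split.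
- exists 2%N, (Xs n), (Ys 0 n); split => //.
  + apply/negP => /in_cnf_vars [c /memD [i [j [_ _ ->]]] /cv_pc]; lia.
  + split.
    * move=> a /mem_Xs [i il ->]; apply/fsubsetP => w /cv_lx ->.
      apply: (@in_vars _ (pc i 0)); first by apply/memD; exists i, 0%N; split => //; lia.
      by apply: (@in_cv _ _ true); rewrite mem_pc eqxx.
    * move=> b /mem_Ys [j jl ->]; apply/fsubsetP => w /cv_ly ->.
      apply: (@in_vars _ (pc 0 j)); first by apply/memD; exists 0%N, j; split => //; lia.
      by apply: (@in_cv _ _ true); rewrite mem_pc eqxx orbT.
  + apply/fsubsetP => c /memR1 [i [j [? ? ->]]]; apply/memD; exists i, j; split => //; lia.
  + rewrite card_res.
    apply: leq_ltn_trans (leq_add (card_img_Xs _ _) (card_img_Ys _ _ _)) _; nia.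
- exists 5%N, (Xs n), (Ys n (N - n)); split => //.
  + apply/negP => /in_cnf_vars [c /memD1 [[/memD [i [j [_ _ ->]]] _]|[i _ ->]|[j _ ->]]].
    * by move/cv_pc; lia.
    * by case/cv_U1 => [|/cv_lx] /=; lia.
    * by case/cv_U1 => [|/cv_ly] /=; lia.
  + split.
    * move=> a /mem_Xs [i il ->]; apply/fsubsetP => w /cv_lx ->.
      apply: (@in_vars _ ((2%N, true) |` lx i)); first by apply/memD1; constructor 2; exists i.
      by apply: (@in_cv _ _ true); rewrite /lx !inE eqxx orbT.
    * move=> b /mem_Ys [j jl ->]; apply/fsubsetP => w /cv_ly ->.
      apply: (@in_vars _ (pc 0 j)); first by apply: pcD1; lia.
      by apply: (@in_cv _ _ true); rewrite mem_pc eqxx orbT.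
  + by apply/fsubsetP => c /memR2 [i [j [? ? ->]]]; apply: pcD1.
  + rewrite card_res.
    apply: leq_ltn_trans (leq_add (card_img_Xs _ _) (card_img_Ys _ _ _)) _; nia.
- apply: (@star_tw D2 2 5 (3 * N + 3)).
  + apply: (@in_vars _ ((2%N, true) |` lx 0)); last by apply: (@in_cv _ _ true); rewrite !inE eqxx.
    apply/memD2; constructor 1; split; first by apply/memD1; constructor 2; exists 0%N => //; lia.
    apply/negP => /memR2 [i [j [_ _ E]]].
    have h := notpc (2%N, true) ((2%N, true) |` lx 0) i j (fset1U1 _ _).
    rewrite E eqxx in h; move: h => /=; case: eqP => ?; first lia; case: eqP => ?; first lia; by move/(_ isT isT).
  + apply: (@in_vars _ ((5%N, true) |` lx 0)); last by apply: (@in_cv _ _ true); rewrite !inE eqxx.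
    by apply/memD2; constructor 2; exists 0%N => //; lia.
  + move=> c /memD2 [[/memD1 [[/memD [i [j [il jl ->]]] nR1]|[i il ->]|[j jl ->]] nR2]|[i il ->]|[j jl ->]].
    * exfalso; case: (ltnP j n) => jn.
        by move/negP: nR1; apply; apply/memR1; exists i, j.
      by move/negP: nR2; apply; apply/memR2; exists i, j; split => //; apply/andP.
    * exists (3 * i)%N; first lia.
      apply/fsubsetP => w /cv_U1 [-> | /cv_lx ->]; by rewrite !inE eqxx ?orbT.
    * exists (3 * j + 1)%N; first lia.
      apply/fsubsetP => w /cv_U1 [-> | /cv_ly ->]; by rewrite !inE eqxx ?orbT.
    * exists (3 * i)%N; first lia.
      apply/fsubsetP => w /cv_U1 [-> | /cv_lx ->]; by rewrite !inE eqxx ?orbT.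
    * exists (3 * j + 1)%N; first lia.
      apply/fsubsetP => w /cv_U1 [-> | /cv_ly ->]; by rewrite !inE eqxx ?orbT.
Qed.
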